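(* Let $n\ge2$, let $\overline{G}_n=\overline{H}_0\overline{H}_1\cdots\overline{H}_{n-1}$ be a polyphenyl hexagonal chain with $n$ hexagons, and let $\overline{G}_{n-1}=\overline{H}_0\cdots\overline{H}_{n-2}$. Then $$W(\overline{G}_n)=W(\overline{G}_{n-1})+6\,W(\overline{G}_{n-1},t_{n-1})+90n-63,$$ and for every vertex $t_n$ of $\overline{H}_{n-1}$ other than $c_{n-1}$, $$W(\overline{G}_n,t_n)=W(\overline{G}_{n-1},t_{n-1})+g(t_n),$$ where $g(t_n)=12(n-1)+9$ if $t_n$ is an ortho-vertex $o_{n-1}$, $g(t_n)=18(n-1)+9$ if $t_n$ is a meta-vertex $m_{n-1}$, and $g(t_n)=24(n-1)+9$ if $t_n$ is the para-vertex $p_{n-1}$ of $\overline{H}_{n-1}$. Moreover $W(\overline{G}_1)=W(\overline{H}_0)=27$ and $W(\overline{G}_1,t_1)=g(t_1)=9$ for any vertex $t_1$ of $\overline{H}_0$.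
   Context: All graphs are simple and connected; $d(u,v)$ is the shortest-path distance; $W(G,v)=\sum_{u\in V(G)}d_G(u,v)$ and the Wiener index is $W(G)=\sum_{\{u,v\}\subseteq V(G)}d_G(u,v)$. A polyphenyl hexagonal chain $\overline{G}_n=\overline{H}_0\overline{H}_1\cdots\overline{H}_{n-1}$ of length $n$ consists of pairwise vertex-disjoint hexagons (6-cycles) $\overline{H}_0,\dots,\overline{H}_{n-1}$ together with cut-edges: $\overline{G}_1=\overline{H}_0$, and for $k\ge1$, $\overline{G}_{k+1}$ is obtained from $\overline{G}_k$ by adding the hexagon $\overline{H}_k$ and a cut-edge joining a vertex $c_k$ of $\overline{H}_k$ to a vertex $t_k$ of $\overline{H}_{k-1}$ (the tail), where for $k\ge2$, $t_k\ne c_{k-1}$ (i.e. $t_k$ is a non-cut-vertex of the terminal hexagon $\overline{H}_{k-1}$). For $k\ge1$, a vertex of $\overline{H}_k$ at distance $1$, $2$, $3$ from $c_k$ is an ortho-, meta-, para-vertex of $\overline{H}_k$, denoted $o_k,m_k,p_k$. *)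

(* Defs.v *)
From mathcomp Require Import all_boot.
Set Implicit Arguments. Unset Strict Implicit. Unset Printing Implicit Defensive.

Definition nbhd (T : finType) (e : rel T) (S : {set T}) : {set T} :=
  S :|: [set y | [exists x in S, e x y]].

(* shortest-path distance d(u,v): the least k such that v is reachable from u
   by a walk of length <= k (for connected graphs this is < #|T|) *)
Definition gdist (T : finType) (e : rel T) (u v : T) : nat :=
  find (fun k => v \in iter k (nbhd e) [set u]) (iota 0 #|T|).

Definition Wv (T : finType) (e : rel T) (v : T) : nat :=
  \sum_(u : T) gdist e u v.

Definition Wiener (T : finType) (e : rel T) : nat :=
  \sum_(u : T) \sum_(v : T | enum_rank u < enum_rank v) gdist e u v.

Definition hex_adj : rel 'I_6 :=
  fun a b => (b == (a + 1) %% 6 :> nat) || (a == (b + 1) %% 6 :> nat).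

(* vertex (k, j) = vertex j of hexagon H_k, for k < n *)
Definition V (n : nat) : finType := ('I_n * 'I_6)%type.

(* The chain Gbar_n = H_0 ... H_{n-1}: for k >= 1 the cut-edge joins
   vertex c k of H_k to vertex t k (the tail) of H_{k-1}. *)
Definition chain_adj (c t : nat -> 'I_6) (n : nat) : rel (V n) :=
  fun x y =>
    [|| (x.1 == y.1) && hex_adj x.2 y.2,
        [&& (x.1).+1 == y.1 :> nat, x.2 == t y.1 & y.2 == c y.1]
      | [&& (y.1).+1 == x.1 :> nat, y.2 == t x.1 & x.2 == c x.1]].

Arguments chain_adj c t n : clear implicits.

Definition valid_chain (c t : nat -> 'I_6) (n : nat) : Prop :=
  forall k, 2 <= k -> k < n -> t k != c k.-1.

(* g as a function of n and of the distance d of t_n from c_{n-1} in H_{n-1}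
   (d = 1 ortho, 2 meta, 3 para) *)
Definition gval (n d : nat) : nat :=
  match d with
  | 1 => 12 * (n - 1) + 9
  | 2 => 18 * (n - 1) + 9
  | 3 => 24 * (n - 1) + 9
  | _ => 0
  end.

(* Main.v *)
Require Import Defs.
From mathcomp Require Import all_boot zify.
Definition hd (a b : 'I_6) : nat := let d := (a + 6 - b) %% 6 in minn d (6 - d).
Ltac d6 := let n := fresh in let H := fresh in case=> [[|[|[|[|[|[|n]]]]]] H]; last by [].
Lemma hd_sym a b : hd a b = hd b a.
Proof. by move: a b; d6; d6. Qed.
Lemma hpred a b : a != b -> exists2 x, hex_adj x b & hd a b = hd a x + 1.
Proof.
move: a b; d6; d6 => // _.
all: first [exists (@Ordinal 6 0 erefl); by [] | exists (@Ordinal 6 1 erefl); by [] |exists (@Ordinal 6 2 erefl); by [] |exists (@Ordinal 6 3 erefl); by [] |exists (@Ordinal 6 4 erefl); by [] |exists (@Ordinal 6 5 erefl); by [] ].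
Qed.
Lemma hedge a x y : hex_adj x y -> hd a y <= hd a x + 1.
Proof. by move: a x y; d6; d6; d6. Qed.
Lemma hsum b : \sum_(a < 6) hd a b = 9.
Proof. rewrite !big_ord_recr big_ord0 /=. by move: b; d6. Qed.
Lemma h0 a : hd a a = 0.
Proof. by move: a; d6. Qed.
Lemma hle a b : hd a b <= 3.
Proof. by move: a b; d6; d6. Qed.
Lemma hpos a b : a != b -> 0 < hd a b.
Proof. by move: a b; d6; d6. Qed.

Lemma find_ge d N : d < N -> find (fun k => d <= k) (iota 0 N) = d.
Proof.
move=> H; rewrite -(subnKC (ltnW H)) iotaD find_cat.
have -> : has (fun k => d <= k) (iota 0 d) = false.
  apply/negbTE/hasPn => k; rewrite mem_iota add0n => /andP[_ Hk]; by rewrite -ltnNge.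
rewrite size_iota add0n.
have : 0 < N - d by lia.
by case: (N - d) => // k _ /=; rewrite leqnn addn0.
Qed.

Lemma gdist_char (T : finType) (e : rel T) (u : T) (D : T -> nat) :
  D u = 0 -> (forall x y, e x y -> D y <= D x + 1) ->
  (forall v, v != u -> exists2 x, e x v & D v = D x + 1) ->
  (forall v, D v < #|T|) -> forall v, gdist e u v = D v.
Proof.
move=> D0 De Dp Db.
have Hit : forall k, iter k (nbhd e) [set u] = [set v | D v <= k].
  elim=> [|k IH] /=.
    apply/setP=> v; rewrite !inE.
    case: (eqVneq v u) => [->|nvu]; first by rewrite D0.
    have [x _ ->] := Dp v nvu. by rewrite addn1.
  apply/setP=> v; rewrite /nbhd IH !inE.
  apply/idP/idP.
    case/orP=> [H|/existsP[x /andP[]]]; first by apply: leq_trans H _.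
    rewrite inE => Hx /De Hv. lia.
  move=> Hv. case: (leqP (D v) k) => [//|Hk] /=.
  have Hvk : D v = k.+1 by lia.
  have nvu : v != u by apply/eqP=> E; move: Hvk; rewrite E D0.
  have [x ex Ex] := Dp v nvu. apply/existsP; exists x.
  rewrite inE ex andbT. lia.
move=> v; rewrite /gdist.
rewrite (@eq_find _ _ (fun k => D v <= k)); last by move=> k; rewrite Hit inE.
exact: find_ge.
Qed.

Lemma gdist_hex a b : gdist hex_adj a b = hd a b.
Proof.
apply: (@gdist_char _ _ a (hd a)) => //.
- exact: h0.
- move=> x y; exact: hedge.
- move=> v nv; apply: hpred; by rewrite eq_sym.
- move=> v; rewrite card_ord; have := hle a v; lia.
Qed.

Lemma eq_sym_neq {T : eqType} {x y : T} : x != y -> y != x.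
Proof. by rewrite eq_sym. Qed.

Fixpoint Fd (c t : nat -> 'I_6) (i : nat) (a : 'I_6) (j : nat) (b : 'I_6) : nat :=
  match j with
  | 0 => hd a b
  | j'.+1 => if i == j'.+1 then hd a b else Fd c t i a j' (t j'.+1) + 1 + hd (c j'.+1) b
  end.

Lemma Fd_eq c t i a b : Fd c t i a i b = hd a b.
Proof. by case: i => //= i; rewrite eqxx. Qed.

Lemma Fd_S c t i a j b : i <= j ->
  Fd c t i a j.+1 b = Fd c t i a j (t j.+1) + 1 + hd (c j.+1) b.
Proof. by move=> H /=; rewrite ltn_eqF. Qed.

Lemma Fd_L c t i a j b : i < j ->
  Fd c t i a j b = hd a (t i.+1) + 1 + Fd c t i.+1 (c i.+1) j b.
Proof.
elim: j b => // j IH b Hij; rewrite Fd_S; last by lia.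
case: (ltngtP i j) => H; first by rewrite IH // Fd_S // !addnA.
- lia.
- by rewrite H !Fd_eq.
Qed.

Lemma Fd_le c t i a j b : i <= j -> Fd c t i a j b <= 4 * (j - i) + 3.
Proof.
elim: j b => [|j IH] b Hij; first by rewrite /=; have := hle a b; lia.
case: (eqVneq i j.+1) => [->|H]; first by rewrite Fd_eq; have := hle a b; lia.
rewrite Fd_S; last by lia.
have := IH (t j.+1) ltac:(lia). have := hle (c j.+1) b. lia.
Qed.

Definition Dd c t i a j b := if i <= j then Fd c t i a j b else Fd c t j b i a.

Lemma Dd_sym c t i a j b : Dd c t i a j b = Dd c t j b i a.
Proof.
rewrite /Dd; case: (ltngtP i j) => H //.
by rewrite H !Fd_eq hd_sym.
Qed.

Lemma Dd_same c t i a b : Dd c t i a i b = hd a b.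
Proof. by rewrite /Dd leqnn Fd_eq. Qed.

Lemma Dd_after c t i a j b : i <= j ->
  Dd c t i a j.+1 b = Dd c t i a j (t j.+1) + 1 + hd (c j.+1) b.
Proof. by move=> H; rewrite /Dd H Fd_S // (leq_trans H). Qed.

Lemma Dd_before c t i a j b : j < i ->
  Dd c t i a j b = hd b (t j.+1) + 1 + Dd c t i a j.+1 (c j.+1).
Proof.
move=> H; rewrite /Dd.
have -> : (i <= j) = false by lia.
rewrite Fd_L //.
case: (eqVneq i j.+1) => [E|E].
- by rewrite E leqnn !Fd_eq; congr (_ + _); apply: hd_sym.
- have -> : (i <= j.+1) = false by lia.
  by [].
Qed.

Lemma Dd_le c t i a j b : Dd c t i a j b <= 4 * (maxn i j - minn i j) + 3.
Proof.
rewrite /Dd; case: (leqP i j) => H.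
- have := Fd_le c t i a j b H. lia.
- have := Fd_le c t j b i a (ltnW H). lia.
Qed.

Lemma Dd_hedge c t i a j b b' : hex_adj b b' -> Dd c t i a j b' <= Dd c t i a j b + 1.
Proof.
move=> Hb; case: (ltngtP i j) => H.
- case: j H => // j H; rewrite (Dd_after c t i a j b) // (Dd_after c t i a j b') //; have := hedge (c j.+1) b b' Hb; lia.
- rewrite (Dd_before c t i a j b H) (Dd_before c t i a j b' H) (hd_sym b) (hd_sym b'); have := hedge (t j.+1) b b' Hb; lia.
- by rewrite H !Dd_same; apply: hedge.
Qed.

Lemma Dd_cross c t i a j :
  Dd c t i a j.+1 (c j.+1) = Dd c t i a j (t j.+1) + 1 \/
  Dd c t i a j (t j.+1) = Dd c t i a j.+1 (c j.+1) + 1.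
Proof.
case: (leqP i j) => H.
- by left; rewrite Dd_after // h0 addn0.
- by right; rewrite (Dd_before c t i a j (t j.+1) H) h0 add0n addnC.
Qed.

Lemma gdist_chain c t n (u v : V n) :
  gdist (chain_adj c t n) u v = Dd c t u.1 u.2 v.1 v.2.
Proof.
case: u => ui ua; move: v.
apply: (@gdist_char _ _ (ui, ua) (fun v => Dd c t ui ua v.1 v.2)) => /=.
- by rewrite Dd_same h0.
- move=> [i1 b1] [i2 b2]; rewrite /chain_adj /=.
  case/or3P=> [/andP[/eqP <- H]|/and3P[/eqP E1 /eqP E2 /eqP E3]|/and3P[/eqP E1 /eqP E2 /eqP E3]].
  + exact: Dd_hedge.
  + rewrite E2 E3 -E1; case: (Dd_cross c t ui ua i1) => ->; lia.
  + rewrite E2 E3 -E1; case: (Dd_cross c t ui ua i2) => ->; lia.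
- move=> [vj vb] /= Hne.
  case: (ltngtP ui vj) => H.
  + case: (eqVneq vb (c vj)) => Hb.
    * case: vj H Hb Hne => [[|j] Hj] //= H Hb Hne.
      exists (Ordinal (ltnW Hj), t j.+1); first by rewrite /chain_adj /= !eqxx Hb eqxx orbT.
      by rewrite /= (Dd_after c t ui ua j vb) // Hb h0 addn0.
    * have [x Hx Ex] := hpred _ _ (eq_sym_neq Hb).
      exists (vj, x); first by rewrite /chain_adj /= eqxx Hx.
      case: vj H Hb Hne Ex Hx => [[|j] Hj] //= H Hb Hne Ex Hx.
      rewrite (Dd_after c t ui ua j vb) // (Dd_after c t ui ua j x) // Ex; lia.
  + case: (eqVneq vb (t vj.+1)) => Hb.
    * have Hj : vj.+1 < n by apply: leq_ltn_trans (ltn_ord ui).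
      exists (Ordinal Hj, c vj.+1); first by rewrite /chain_adj /= Hb !eqxx /= !orbT.
      by rewrite /= (Dd_before c t ui ua vj vb H) Hb h0 add0n addnC.
    * have [x Hx Ex] := hpred _ _ (eq_sym_neq Hb).
      exists (vj, x); first by rewrite /chain_adj /= eqxx Hx.
      rewrite /= (Dd_before c t ui ua vj vb H) (Dd_before c t ui ua vj x H) (hd_sym vb) (hd_sym x) Ex; lia.
  + have Hu : ua != vb.
      apply: contraNneq Hne => E; apply/eqP; congr pair => //; exact: val_inj.
    have [x Hx Ex] := hpred _ _ Hu.
    exists (vj, x); first by rewrite /chain_adj /= eqxx Hx.
    by rewrite /= H !Dd_same Ex.
- move=> [vj vb] /=; rewrite /V card_prod !card_ord.
  have := Dd_le c t ui ua vj vb. have := ltn_ord ui. have := ltn_ord vj. lia.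
Qed.

Lemma Wiener2 (T : finType) (e : rel T) :
  (forall u v, gdist e u v = gdist e v u) -> (forall u, gdist e u u = 0) ->
  Wiener e * 2 = \sum_u \sum_v gdist e u v.
Proof.
move=> Hs H0; rewrite /Wiener.
set r := @enum_rank T.
have Hsplit : forall u, \sum_v gdist e u v =
   \sum_(v | r u < r v) gdist e u v + \sum_(v | r v < r u) gdist e u v.
  move=> u; rewrite (bigID (fun v => r u < r v)) /=; congr (_ + _).
  rewrite (bigID (fun v => r v < r u)) /= [X in _ + X]big1 ?addn0.
    apply: eq_bigl => v; apply/andP/idP => [[]//|H]; split=> //; rewrite -leqNgt ltnW //.
  move=> v /andP[H1 H2].
  move: H1 H2; rewrite -!leqNgt => H1 H2.
  have E : r u = r v by apply/val_inj/eqP; rewrite eqn_leq H1 H2.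
  by rewrite (enum_rank_inj E) H0.
rewrite (eq_bigr _ (fun u _ => Hsplit u)) big_split /=.
rewrite muln2 -addnn; congr (_ + _).
under [RHS]eq_bigr do rewrite big_mkcond.
rewrite exchange_big /=.
under [LHS]eq_bigr do rewrite big_mkcond.
apply: eq_bigr => u _; apply: eq_bigr => v _.
by case: ifP => // _; rewrite Hs.
Qed.

Lemma sumV n (F : V n -> nat) : \sum_(u : V n) F u = \sum_(i < n) \sum_(a < 6) F (i, a).
Proof. by rewrite pair_bigA; apply: eq_bigr => -[]. Qed.

Lemma sum6c (x : nat) : \sum_(a < 6) x = 6 * x.
Proof. by rewrite sum_nat_const card_ord. Qed.

Lemma sumc n (x : nat) : \sum_(a < n) x = n * x.
Proof. by rewrite sum_nat_const card_ord. Qed.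

Lemma hsum2 a : \sum_(b < 6) hd a b = 9.
Proof. rewrite -(hsum a); apply: eq_bigr => b _; exact: hd_sym. Qed.

Lemma sumlin m (X : 'I_m -> 'I_6 -> nat) p q :
  \sum_(i<m) \sum_(a<6) (p * X i a + q) = p * (\sum_(i<m) \sum_(a<6) X i a) + m * (6 * q).
Proof.
rewrite big_distrr /= -(sumc m (6*q)) -big_split /=; apply: eq_bigr => i _.
by rewrite big_distrr -sum6c -big_split.
Qed.

Lemma Wsym c t m : Wiener (chain_adj c t m) * 2 =
  \sum_(i<m) \sum_(a<6) \sum_(j<m) \sum_(b<6) Dd c t i a j b.
Proof.
rewrite Wiener2; last 2 first.
- by move=> u v; rewrite !gdist_chain Dd_sym.
- by move=> u; rewrite gdist_chain Dd_same h0.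
rewrite sumV; apply: eq_bigr => i _; apply: eq_bigr => a _.
rewrite sumV; apply: eq_bigr => j _; apply: eq_bigr => b _; exact: gdist_chain.
Qed.

Theorem theorem3p1 (c t : nat -> 'I_6) (n : nat) :
  2 <= n -> valid_chain c t n ->
  [/\ Wiener (chain_adj c t 1) = 27,
      (forall v : V 1, Wv (chain_adj c t 1) v = 9)
    & forall w : V n.-1, (w.1 : nat) = n - 2 -> w.2 = t (n - 1) ->
        Wiener (chain_adj c t n) =
          Wiener (chain_adj c t n.-1) + 6 * Wv (chain_adj c t n.-1) w + 90 * n - 63
        /\ (forall v : V n, (v.1 : nat) = n - 1 -> v.2 != c (n - 1) ->
              Wv (chain_adj c t n) v =
                Wv (chain_adj c t n.-1) w + gval n (gdist hex_adj (c (n - 1)) v.2))].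
Proof.
case: n => [|[|k]] // _ _.
split.
- have := Wsym c t 1; rewrite big_ord1.
  rewrite (eq_bigr (fun a => 9)); last first.
    move=> a _; rewrite big_ord1 -(hsum2 a); apply: eq_bigr => b _; exact: Dd_same.
  rewrite sum6c; lia.
- case=> [[[|//] Hi] b]; rewrite /Wv sumV big_ord1 -(hsum b).
  apply: eq_bigr => a _; rewrite gdist_chain /=; exact: Dd_same.
move=> w Hw1 Hw2.
have E2 : k.+2 - 2 = k by lia.
have E1 : k.+2 - 1 = k.+1 by lia.
rewrite E2 in Hw1; rewrite E1 in Hw2 *.
set WV := \sum_(i<k.+1) \sum_(a<6) Dd c t i a k (t k.+1).
have HW : Wv (chain_adj c t k.+1) w = WV.
  rewrite /Wv sumV; apply: eq_bigr => i _; apply: eq_bigr => a _.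
  rewrite gdist_chain /= Hw1 Hw2; congr Dd; lia.
have KL : forall (i : 'I_k.+1) a b, Dd c t i a k.+1 b = 1 * Dd c t i a k (t k.+1) + (1 + hd (c k.+1) b).
  move=> i a b; rewrite Dd_after ?mul1n ?addnA //; have := ltn_ord i; lia.
have HA : forall b, \sum_(i<k.+1) \sum_(a<6) Dd c t i a k.+1 b = WV + k.+1 * (6 * (1 + hd (c k.+1) b)).
  move=> b; rewrite -[WV]mul1n -sumlin; apply: eq_bigr => i _; apply: eq_bigr => a _; exact: KL.
have HA2 : \sum_(i<k.+1) \sum_(a<6) \sum_(b<6) Dd c t i a k.+1 b = 6 * WV + k.+1 * (6 * 15).
  rewrite -sumlin; apply: eq_bigr => i _; apply: eq_bigr => a _.
  rewrite (eq_bigr _ (fun b _ => KL i a b)) big_split /= sum6c big_split /= sum6c hsum2; lia.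
split; last first.
  case=> vj vb /= Hv1 Hv2; rewrite HW gdist_hex /Wv sumV big_ord_recr /=.
  rewrite (eq_bigr (fun i : 'I_k.+1 => \sum_(a<6) Dd c t i a k.+1 vb)); last first.
    by move=> i _; apply: eq_bigr => a _; rewrite gdist_chain /= Hv1.
  rewrite HA (eq_bigr (fun a => hd a vb)); last first.
    by move=> a _; rewrite gdist_chain /= Hv1 Dd_same.
  rewrite hsum.
  have := hpos _ _ (eq_sym_neq Hv2); have := hle (c k.+1) vb.
  case: (hd (c k.+1) vb) => [|[|[|[|d]]]] //= _ _; lia.
have Hm := Wsym c t k.+1; have Hn := Wsym c t k.+2.
rewrite HW.
rewrite big_ord_recr /= in Hn.
rewrite (eq_bigr (fun i : 'I_k.+1 => \sum_(a<6) \sum_(j<k.+1) \sum_(b<6) Dd c t i a j b + \sum_(a<6) \sum_(b<6) Dd c t i a k.+1 b)) in Hn; last first.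
  by move=> i _; rewrite -big_split; apply: eq_bigr => a _; rewrite big_ord_recr.
rewrite big_split /= HA2 in Hn.
rewrite (eq_bigr (fun a : 'I_6 => \sum_(j<k.+1) \sum_(b<6) Dd c t k.+1 a j b + \sum_(b<6) hd a b)) in Hn; last first.
  move=> a _; rewrite big_ord_recr /=; congr (_ + _); apply: eq_bigr => b _; exact: Dd_same.
have Hc : \sum_(a<6) \sum_(b<6) hd a b = 54.
  by rewrite (eq_bigr (fun a => 9)) ?sum6c // => a _; exact: hsum2.
have HB : \sum_(a<6) \sum_(j<k.+1) \sum_(b<6) Dd c t k.+1 a j b = 6 * WV + k.+1 * (6 * 15).
  rewrite exchange_big /= -HA2; apply: eq_bigr => j _.
  rewrite exchange_big; apply: eq_bigr => b _; apply: eq_bigr => a _; exact: Dd_sym.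
rewrite big_split /= Hc HB in Hn.
change (k.+2.-1) with k.+1. rewrite -Hm in Hn. lia.
Qed.
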